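(* Let $\varphi(z,x,y)$ satisfy conditions (C1), (C3), (C4), (C5) stated in the context. Assume that $\varphi(z,x,y)$ is twice continuously differentiable in $z$ for almost all $(x,y)\in\Omega\times\Omega$ and satisfies \[ \varphi''(z,x,y)\geq c_7z^{-2}\varphi(z,x,y),\qquad z>0, \] with a constant $c_7$ independent of $z,x,y$. Then $\varphi$ is uniformly convex in the following sense: for every $\varepsilon>0$ there exists $\delta\in(0,1)$ such that \[ \varphi\left(\frac{s+t}{2},x,y\right)\leq (1-\delta)\frac{\varphi(s,x,y)+\varphi(t,x,y)}{2} \] for almost all $(x,y)\in\Omega\times\Omega$ and all $s>0$, $t>0$ with $|s-t|\geq\varepsilon\max\{s,t\}$.
   Context: $\Omega\subseteq\mathbb{R}^d$ is a domain and $\varphi(z,x,y)\ge0$ on $\mathbb{R}_+\times\Omega\times\Omega$. Conditions: (C1) for each $u\in L_{1,loc}(\Omega)$ the function $\varphi(|u(x)-u(y)|,x,y)$ is measurable on $\Omega\times\Omega$; (C3) there are constants $1<p_-\le p_+$ and $\beta\ge1$ such that $r(t)=\varphi(t,x,y)/t^{p_-}$ satisfies $r(s)\le\beta r(t)$ and $r(t)=\varphi(t,x,y)/t^{p_+}$ satisfies $\beta r(s)\ge r(t)$ for all $0\le s\le t$, a.a. $(x,y)$; (C4) $c_1^{-1}\le\varphi(1,x,y)\le c_1$, $\varphi(0,x,y)=0$, $\varphi(t,x,y)>0$ for $t>0$, a.a. $(x,y)$; (C5) $\varphi$ is differentiable in $t>0$ and $0<t\varphi'(t,x,y)\le c_2\varphi(t,x,y)$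 with a constant $c_2>1$. Derivatives $\varphi',\varphi''$ are with respect to the first variable. *)

(* Defs.v *)
From mathcomp Require Import all_boot all_order all_algebra.
From mathcomp Require Import all_classical all_reals all_analysis.
Import numFieldNormedType.Exports.
Import Order.TTheory GRing.Theory Num.Theory.

Set Implicit Arguments.
Unset Strict Implicit.
Unset Printing Implicit Defensive.

Local Open Scope classical_set_scope.
Local Open Scope ring_scope.

(* Points of R^n are row vectors 'rV[R]_n.  MathComp-Analysis has no
   Lebesgue measure on R^n, so we define the Lebesgue outer measure by
   covers with closed boxes, as in the textbook construction. *)

Definition in_box (R : realType) (n : nat) (a b : 'rV[R]_n) (z : 'rV[R]_n) : Prop :=
  forall i : 'I_n, a ord0 i <= z ord0 i <= b ord0 i.

Definition box_vol (R : realType) (n : nat) (a b : 'rV[R]_n) : R :=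
  \prod_(i < n) Num.max 0 (b ord0 i - a ord0 i).

Definition lebesgue_outer (R : realType) (n : nat) (A : set 'rV[R]_n) : \bar R :=
  ereal_inf [set v : \bar R | exists a b : nat -> 'rV[R]_n,
     (forall z, A z -> exists k, in_box (a k) (b k) z) /\
     v = (\sum_(0 <= k <oo) (box_vol (a k) (b k))%:E)%E].

Definition lnull (R : realType) (n : nat) (A : set 'rV[R]_n) : Prop :=
  lebesgue_outer A = 0%E.

Definition lmeasurable (R : realType) (n : nat) (E : set 'rV[R]_n) : Prop :=
  forall e : R, 0 < e -> exists G : set 'rV[R]_n,
    open G /\ E `<=` G /\ (lebesgue_outer (G `\` E) <= e%:E)%E.

Definition lmeasurable_fun (R : realType) (n : nat) (D : set 'rV[R]_n)
    (f : 'rV[R]_n -> R) : Prop :=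
  lmeasurable D /\ forall a : R, lmeasurable (D `&` [set z | a < f z]).

(* Lebesgue integral over K of a nonnegative function g (layer-cake formula) *)
Definition lintegral_nonneg (R : realType) (n : nat) (K : set 'rV[R]_n)
    (g : 'rV[R]_n -> R) : \bar R :=
  (\int[@lebesgue_measure R]_(t in [set t : R | (0 <= t)%R])
      lebesgue_outer (K `&` [set z | ((t : R) < g z)%R]))%E.

Definition L1loc (R : realType) (d : nat) (Omega : set 'rV[R]_d)
    (u : 'rV[R]_d -> R) : Prop :=
  lmeasurable_fun Omega u /\
  forall K : set 'rV[R]_d, compact K -> K `<=` Omega ->
    (lintegral_nonneg K (fun x => `|u x|%R) < +oo)%E.

(* Omega x Omega as a subset of R^(d+d), with (x,y) ~ row_mx x y *)
Definition sqset (R : realType) (d : nat) (Omega : set 'rV[R]_d) : set 'rV[R]_(d + d) :=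
  [set z | Omega (lsubmx z) /\ Omega (rsubmx z)].

Definition ae2 (R : realType) (d : nat) (Omega : set 'rV[R]_d)
    (P : 'rV[R]_d -> 'rV[R]_d -> Prop) : Prop :=
  lnull [set z | sqset Omega z /\ ~ P (lsubmx z) (rsubmx z)].

Definition domain (R : realType) (d : nat) (Omega : set 'rV[R]_d) : Prop :=
  Omega !=set0 /\ open Omega /\ connected Omega.

Section Conds.
Variables (R : realType) (d : nat) (Omega : set 'rV[R]_d)
          (phi : R -> 'rV[R]_d -> 'rV[R]_d -> R).

Definition C1 : Prop :=
  forall u : 'rV[R]_d -> R, L1loc Omega u ->
    lmeasurable_fun (sqset Omega)
      (fun z => phi `|u (lsubmx z) - u (rsubmx z)| (lsubmx z) (rsubmx z)).

Definition C3 (pm pp beta : R) : Prop :=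
  1 < pm /\ pm <= pp /\ 1 <= beta /\
  ae2 Omega (fun x y => forall s t : R, 0 < s -> s <= t ->
     phi s x y / s `^ pm <= beta * (phi t x y / t `^ pm) /\
     phi t x y / t `^ pp <= beta * (phi s x y / s `^ pp)).

Definition C4 (c1 : R) : Prop :=
  ae2 Omega (fun x y => c1^-1 <= phi 1 x y <= c1 /\ phi 0 x y = 0 /\
                        forall t : R, 0 < t -> 0 < phi t x y).

Definition C5 (c2 : R) : Prop :=
  1 < c2 /\
  ae2 Omega (fun x y => forall t : R, 0 < t ->
     derivable (fun z => phi z x y) t 1 /\
     0 < t * derive1 (fun z => phi z x y) t <= c2 * phi t x y).

Definition C2_in_z : Prop :=
  ae2 Omega (fun x y => forall z : R, 0 < z ->
     derivable (fun w => phi w x y) z 1 /\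
     derivable (derive1 (fun w => phi w x y)) z 1 /\
     {for z, continuous (derive1 (derive1 (fun w => phi w x y)))}).

Definition second_deriv_bound (c7 : R) : Prop :=
  ae2 Omega (fun x y => forall z : R, 0 < z ->
     c7 * z ^- 2 * phi z x y <= derive1 (derive1 (fun w => phi w x y)) z).

Definition uniformly_convex : Prop :=
  forall eps : R, 0 < eps -> exists delta : R, 0 < delta < 1 /\
    ae2 Omega (fun x y => forall s t : R, 0 < s -> 0 < t ->
      eps * Num.max s t <= `|s - t| ->
      phi ((s + t) / 2) x y <= (1 - delta) * ((phi s x y + phi t x y) / 2)).
End Conds.

(* Main.v *)
Require Import Defs.
From mathcomp Require Import all_boot all_order all_algebra.
From mathcomp Require Import all_classical all_reals all_analysis.
From mathcomp Require Import ring lra.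
Import numFieldNormedType.Exports.
Import Order.TTheory GRing.Theory Num.Theory.
Local Open Scope classical_set_scope.
Local Open Scope ring_scope.

Section Meas.
Variables (R : realType) (n : nat).

Lemma box_vol_ge0 (a b : 'rV[R]_n) : 0 <= box_vol a b.
Proof. by apply: prodr_ge0 => i _; rewrite le_max lexx. Qed.

Lemma outer_ge0 (A : set 'rV[R]_n) : (0 <= lebesgue_outer A)%E.
Proof.
apply/ereal_infP => y [a [b [_ ->]]].
by apply: nneseries_ge0 => k _ _; rewrite lee_fin box_vol_ge0.
Qed.

Lemma lnull_sub (A B : set 'rV[R]_n) : A `<=` B -> lnull B -> lnull A.
Proof.
move=> AB; rewrite /lnull => HB; apply/eqP; rewrite eq_le outer_ge0 andbT -HB.
apply: le_ereal_inf => y [a [b [Hc ->]]]; exists a, b; split => // z /AB; exact: Hc.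
Qed.

Lemma lnullU (A B : set 'rV[R]_n) : lnull A -> lnull B -> lnull (A `|` B).
Proof.
rewrite /lnull => HA HB; apply/eqP; rewrite eq_le outer_ge0 andbT.
apply/lee_addgt0Pr => e e0; rewrite add0e.
have e20 : 0 < e / 2 by rewrite divr_gt0.
have fin0 : forall C : set 'rV[R]_n, lebesgue_outer C = 0%E ->
    ereal_inf [set v : \bar R | exists a b : nat -> 'rV[R]_n,
     (forall z, C z -> exists k, in_box (a k) (b k) z) /\
     v = (\sum_(0 <= k <oo) (box_vol (a k) (b k))%:E)%E] \is a fin_num.
  by move=> C HC; rewrite -[ereal_inf _]/(lebesgue_outer C) HC.
have [x1 [a1 [b1 [C1 ->]]]] := lb_ereal_inf_adherent e20 (fin0 _ HA).
rewrite -[ereal_inf _]/(lebesgue_outer A) HA add0e => lt1.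
have [x2 [a2 [b2 [C2 ->]]]] := lb_ereal_inf_adherent e20 (fin0 _ HB).
rewrite -[ereal_inf _]/(lebesgue_outer B) HB add0e => lt2.
pose a k := if odd k then a2 k./2 else a1 k./2.
pose b k := if odd k then b2 k./2 else b1 k./2.
pose u1 k := (box_vol (a1 k) (b1 k))%:E.
pose u2 k := (box_vol (a2 k) (b2 k))%:E.
pose u k := (box_vol (a k) (b k))%:E.
have u0 : forall k, (0 <= u k)%E by move=> k; rewrite lee_fin box_vol_ge0.
have u10 : forall k, (0 <= u1 k)%E by move=> k; rewrite lee_fin box_vol_ge0.
have u20 : forall k, (0 <= u2 k)%E by move=> k; rewrite lee_fin box_vol_ge0.
apply: (@le_trans _ _ (\sum_(0 <= k <oo) u k)%E).
  apply: ereal_inf_lbound; exists a, b; split => // z [/C1 [k Hk]|/C2 [k Hk]].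
    by exists k.*2; rewrite /a /b odd_double doubleK.
  by exists k.*2.+1; rewrite /a /b /= odd_double /= uphalf_double.
have part : forall N, (\sum_(0 <= k < N.*2) u k = \sum_(0 <= k < N) u1 k + \sum_(0 <= k < N) u2 k)%E.
  elim=> [|N IH]; first by rewrite !big_geq // adde0.
  rewrite doubleS !big_nat_recr //= IH /u /a /b /= odd_double /= uphalf_double doubleK.
  by rewrite -/(u1 N) -/(u2 N) addeACA -!addeA.
apply: (@le_trans _ _ (\sum_(0 <= k <oo) u1 k + \sum_(0 <= k <oo) u2 k)%E); last first.
  rewrite [e]splitr EFinD; apply: leeD; exact: ltW.
apply: lime_le; first exact: is_cvg_nneseries.
apply: nearW => N.
apply: (@le_trans _ _ (\sum_(0 <= k < N.*2) u k)%E).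
  rewrite [X in (_ <= X)%E](@big_cat_nat _ _ _ N) //=; last by rewrite -addnn leq_addr.
  by rewrite leeDl // sume_ge0.
rewrite part; apply: leeD; exact: nneseries_lim_ge.
Qed.
End Meas.
Arguments lnullU {R n A B}.
Arguments lnull_sub {R n A B}.
Section An.
Variable R : realType.

Lemma mvt_pos (g : R -> R) (a b : R) : 0 < a -> a < b ->
  (forall z, 0 < z -> derivable g z 1) ->
  exists2 c, a < c < b & g b - g a = (derive1 g) c * (b - a).
Proof.
move=> a0 ab dg.
have H1 : forall x, x \in `]a, b[ -> is_derive x 1 g (derive1 g x).
  move=> x; rewrite in_itv /= => /andP[ax _].
  rewrite derive1E; apply: derivableP; apply: dg; exact: lt_trans ax.
have H2 : {within `[a, b], continuous g}.
  apply: derivable_within_continuous => x; rewrite in_itv /= => /andP[ax _].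
  apply: dg; exact: lt_le_trans ax.
have [c cin ->] := MVT ab H1 H2.
by exists c => //; move: cin; rewrite in_itv.
Qed.

Arguments mvt_pos [g a b].

Lemma key (f : R -> R) (c7 s t : R) : 0 < c7 ->
  (forall z, 0 < z -> derivable f z 1) ->
  (forall z, 0 < z -> 0 < derive1 f z) ->
  (forall z, 0 < z -> 0 < f z) ->
  (forall z, 0 < z -> derivable (derive1 f) z 1) ->
  (forall z, 0 < z -> c7 * z ^- 2 * f z <= derive1 (derive1 f) z) ->
  0 < s -> s < t ->
  c7 / 16 * ((t - s) / t) ^+ 2 * f ((s + t) / 2) <= f s + f t - 2 * f ((s + t) / 2).
Proof.
move=> c70 df df0 f0 ddf dd0 s0 st.
have t0 : 0 < t by apply: lt_trans st.
have incf : forall a b, 0 < a -> a <= b -> f a <= f b.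
  move=> a b a0; rewrite le_eqVlt => /orP[/eqP->//|ab].
  have [c /andP[ac cb] E] := mvt_pos a0 ab df.
  rewrite -subr_ge0 E; apply: mulr_ge0; last by rewrite subr_ge0 ltW.
  apply: ltW; apply: df0; exact: lt_trans ac.
have incdf : forall a b, 0 < a -> a <= b -> derive1 f a <= derive1 f b.
  move=> a b a0; rewrite le_eqVlt => /orP[/eqP->//|ab].
  have [c /andP[ac cb] E] := mvt_pos a0 ab ddf.
  have c0 : 0 < c by apply: lt_trans ac.
  rewrite -subr_ge0 E; apply: mulr_ge0; last by rewrite subr_ge0 ltW.
  apply: le_trans _ (dd0 _ c0); apply: mulr_ge0; last exact: ltW (f0 _ c0).
  by rewrite mulr_ge0 ?ltW // invr_gt0 exprn_gt0.
set m := (s + t) / 2.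
set m' := (s + 3 * t) / 4.
have sm : s < m by rewrite /m; lra.
have mm' : m < m' by rewrite /m /m'; lra.
have m't : m' < t by rewrite /m /m'; lra.
have m0 : 0 < m by lra.
have m'0 : 0 < m' by lra.
have [z1 /andP[z1a z1b] E1] := mvt_pos s0 sm df.
have I1 : f m - f s <= derive1 f m * (m - s).
  rewrite E1; apply: ler_wpM2r; first lra. apply: incdf; [exact: lt_trans z1a|exact: ltW].
have [z2 /andP[z2a z2b] E2] := mvt_pos m0 mm' df.
have I2 : derive1 f m * (m' - m) <= f m' - f m.
  rewrite E2; apply: ler_wpM2r; first lra. apply: incdf => //; exact: ltW.
have [z3 /andP[z3a z3b] E3] := mvt_pos m0 mm' ddf.
have I3 : c7 * t ^- 2 * f m * (m' - m) <= derive1 f m' - derive1 f m.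
  rewrite E3; apply: ler_wpM2r; first lra.
  have z30 : 0 < z3 by apply: lt_trans z3a.
  apply: le_trans _ (dd0 _ z30).
  have fz : f m <= f z3 by apply: incf => //; exact: ltW.
  have tz : t ^- 2 <= z3 ^- 2.
    rewrite lef_pV2 ?posrE ?exprn_gt0 //; apply: lerXn2r; rewrite ?nnegrE; lra.
  rewrite -!mulrA; apply: ler_wpM2l; first exact: ltW.
  apply: le_trans (_ : t ^- 2 * f z3 <= _).
    apply: ler_wpM2l => //; by rewrite invr_ge0 exprn_ge0 // ltW.
  by apply: ler_wpM2r => //; exact: ltW (f0 _ z30).
have m't0 : 0 < m' by [].
have [z4 /andP[z4a z4b] E4] := mvt_pos m'0 m't df.
have I4 : derive1 f m' * (t - m') <= f t - f m'.
  rewrite E4; apply: ler_wpM2r; first lra. apply: incdf => //; exact: ltW.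
have fm0 := f0 _ m0.
have tt0 : t ^- 2 = (t ^+ 2)^-1 by [].
have E : c7 / 16 * ((t - s) / t) ^+ 2 * f m = c7 * t ^- 2 * f m * (m' - m) * (t - m').
  rewrite /m /m' expr_div_n; field; lra.
rewrite E.
have hpos : 0 <= t - m' by lra.
have I3' := ler_wpM2r hpos I3.
have Eq : derive1 f m * (m - s) = derive1 f m * (m' - m) + derive1 f m * (t - m').
  by rewrite -mulrDr; congr (_ * _); rewrite /m /m'; lra.
rewrite mulrBl in I3'.
move: I1 I2 I3' I4 Eq.
move: (derive1 f m * (m - s)) (derive1 f m * (m' - m)) (derive1 f m * (t - m')) (derive1 f m' * (t - m')).
move=> A B C D; lra.
Qed.
End An.
Arguments key {R f c7 s t}.

Section AE.
Variables (R : realType) (d : nat) (Omega : set 'rV[R]_d).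

Lemma ae2_mono (P Q : 'rV[R]_d -> 'rV[R]_d -> Prop) :
  ae2 Omega P -> (forall x y, P x y -> Q x y) -> ae2 Omega Q.
Proof.
move=> HP PQ; apply: lnull_sub HP => z [Oz nQ]; split => // /PQ; exact: nQ.
Qed.

Lemma ae2_and (P Q : 'rV[R]_d -> 'rV[R]_d -> Prop) :
  ae2 Omega P -> ae2 Omega Q -> ae2 Omega (fun x y => P x y /\ Q x y).
Proof.
move=> HP HQ; have := lnullU HP HQ; apply: lnull_sub => z [Oz nPQ].
have [p|np] := pselect (P (lsubmx z) (rsubmx z)); last by left.
have [q|nq] := pselect (Q (lsubmx z) (rsubmx z)); last by right.
by exfalso; apply: nPQ.
Qed.
End AE.
Arguments ae2_mono {R d Omega P Q}.
Arguments ae2_and {R d Omega P Q}.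

Section Pt.
Variable R : realType.

Lemma pointwise (f : R -> R) (c7 eps s t : R) : 0 < c7 -> 0 < eps ->
  (forall z, 0 < z -> derivable f z 1) ->
  (forall z, 0 < z -> 0 < derive1 f z) ->
  (forall z, 0 < z -> 0 < f z) ->
  (forall z, 0 < z -> derivable (derive1 f) z 1) ->
  (forall z, 0 < z -> c7 * z ^- 2 * f z <= derive1 (derive1 f) z) ->
  0 < s -> s < t -> eps * t <= t - s ->
  f ((s + t) / 2) <= (1 - (c7 * eps ^+ 2 / 16) / (2 + c7 * eps ^+ 2 / 16)) * ((f s + f t) / 2).
Proof.
move=> c70 e0 df df0 f0 ddf dd0 s0 st et.
have t0 : 0 < t by apply: lt_trans st.
have K := key c70 df df0 f0 ddf dd0 s0 st.
set k := c7 * eps ^+ 2 / 16.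
have k0 : 0 < k by rewrite /k; apply: divr_gt0 => //; apply: mulr_gt0 => //; apply: exprn_gt0.
have fm0 : 0 < f ((s + t) / 2) by apply: f0; lra.
have ek : eps <= (t - s) / t by rewrite ler_pdivlMr.
have ek2 : eps ^+ 2 <= ((t - s) / t) ^+ 2 by apply: lerXn2r; rewrite ?nnegrE; lra.
have kk : k * f ((s + t) / 2) <= c7 / 16 * ((t - s) / t) ^+ 2 * f ((s + t) / 2).
  apply: ler_wpM2r; first exact: ltW.
  rewrite /k mulrAC; apply: ler_wpM2l => //; apply: divr_ge0; lra.
have -> : (1 - k / (2 + k)) * ((f s + f t) / 2) = (f s + f t) / (2 + k).
  by field; lra.
rewrite ler_pdivlMr; last lra.
have H := le_trans kk K.
have -> : f ((s + t) / 2) * (2 + k) = 2 * f ((s + t) / 2) + k * f ((s + t) / 2) by ring.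
move: H; move: (k * f ((s + t) / 2)) => Y; lra.
Qed.
End Pt.
Arguments pointwise {R f c7 eps s t}.

Theorem lemma2p1 (R : realType) (d : nat) (Omega : set 'rV[R]_d)
    (phi : R -> 'rV[R]_d -> 'rV[R]_d -> R)
    (pm pp beta c1 c2 c7 : R) :
  domain Omega ->
  C1 Omega phi ->
  C3 Omega phi pm pp beta ->
  C4 Omega phi c1 ->
  C5 Omega phi c2 ->
  C2_in_z Omega phi ->
  0 < c7 ->
  second_deriv_bound Omega phi c7 ->
  uniformly_convex Omega phi.
Proof.
move=> _ _ _ _ [c21 H5] H2 c70 Hsd eps e0.
set k := c7 * eps ^+ 2 / 16.
have k0 : 0 < k by rewrite /k; apply: divr_gt0 => //; apply: mulr_gt0 => //; apply: exprn_gt0.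
exists (k / (2 + k)); split.
  apply/andP; split; first by apply: divr_gt0; lra.
  by rewrite ltr_pdivrMr; lra.
have HH := ae2_and H5 (ae2_and H2 Hsd).
refine (ae2_mono HH _).
move=> x y [h5 [h2 hsd]].
pose f := fun z => phi z x y.
have df : forall z, 0 < z -> derivable f z 1 by move=> z /h5 [].
have df0 : forall z, 0 < z -> 0 < derive1 f z.
  by move=> z z0; have [_ /andP[P _]] := h5 z z0; rewrite pmulr_rgt0 in P.
have f0 : forall z, 0 < z -> 0 < f z.
  move=> z z0; have [_ /andP[P Q]] := h5 z z0.
  by have := lt_le_trans P Q; rewrite pmulr_rgt0 //; lra.
have ddf : forall z, 0 < z -> derivable (derive1 f) z 1.
  by move=> z z0; have [_ [D _]] := h2 z z0; exact: D.
have dd0 : forall z, 0 < z -> c7 * z ^- 2 * f z <= derive1 (derive1 f) z by [].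
move=> s t s0 t0 H.
have [st|ts|st] := ltgtP s t.
- have : eps * t <= t - s.
    move: H; rewrite distrC ger0_norm; last by rewrite subr_ge0 ltW.
    by rewrite /Num.Def.maxr st.
  exact: (pointwise c70 e0 df df0 f0 ddf dd0 s0 st).
- have : eps * s <= s - t.
    have nst : (s < t) = false by rewrite ltNge ltW.
    move: H; rewrite ger0_norm; last by rewrite subr_ge0 ltW.
    by rewrite /Num.Def.maxr nst.
  move=> H'; rewrite [s + t]addrC [phi s x y + _]addrC.
  exact: (pointwise c70 e0 df df0 f0 ddf dd0 t0 ts H').
- by move: H; rewrite st subrr normr0 /Num.Def.maxr if_same pmulr_rle0 //; lra.
Qed.
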